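(* Let $n\ge1$, $k\in\{1,\dots,n\}$, scores $s_1,\dots,s_n\in\mathbb{R}$ not all equal, $p=\frac{n-k}{n}+\frac{1}{2n}$, $f_i(x)=\rho_p(s_i-x)$ and $f=\sum_{i=1}^n f_i$. Let $\tilde f_h=\sum_{i=1}^n\tilde f_i^h$ be a convex smooth approximation of $f$ with smoothing parameter $h$ satisfying the Standing Assumption below (with constants $L_h,M_h,U_h$), and let $\theta_k^h$ be a minimizer of $\tilde f_h$ over $\mathbb{R}$. If $U_h\le \frac{g_m\Delta}{8}$ and $x\in\mathbb{R}$ satisfies $\tilde f_h(x)-\tilde f_h(\theta_k^h)<\frac{g_m\Delta}{4}$, then $|x-\theta_k|\le\frac{\Delta}{2}$.
   Context: The pinball loss is $\rho_p(x)=p\,x$ if $x\ge0$ and $\rho_p(x)=-(1-p)x$ if $x<0$. The scores sorted in descending order are $\theta_1\ge\cdots\ge\theta_n$; $\theta_k$ is the $k$-th largest score (the unique minimizer of $f$). $\overline{m}$ is the number of indices $j\le k$ with $\theta_j=\theta_k$, $\underline{m}$ is the number of indices $j>k$ with $\theta_j=\theta_k$, $g_m=\min\{\overline{m}-\frac12,\underline{m}+\frac12\}$, and $\Delta=\min\{|s_i-\theta_k|: s_i\ne\theta_k\}$. Standing Assumption: each $\tilde f_i^h:\mathbb{R}\to\mathbb{R}$ is convex and differentiable, $\tilde f_h=\sum_i\tilde f_i^h$ satisfies $|\tilde f_h(x)-\tilde f_h(y)|\le L_h|x-y|$ and $|\tilde f_h'(x)-\tilde f_h'(y)|\le M_h|x-y|$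 for all $x,y$, $|f(x)-\tilde f_h(x)|\le U_h$ for all $x$, and each $\tilde f_i^h$ satisfies $|(\tilde f_i^h)'(x)-(\tilde f_i^h)'(y)|\le\frac{M_h}{n}|x-y|$ for all $x,y$. *)

(* Defs.v *)
From HB Require Import structures.
From mathcomp Require Import all_boot all_order all_algebra.
From mathcomp Require Import all_classical all_reals all_analysis.
Set Implicit Arguments. Unset Strict Implicit. Unset Printing Implicit Defensive.
Import Order.TTheory GRing.Theory Num.Theory.
Local Open Scope ring_scope.

Section Defs.
Variable R : realType.

Definition pinball (p x : R) : R := if 0 <= x then p * x else - (1 - p) * x.

Definition plevel (n k : nat) : R := (n - k)%:R / n%:R + 1 / (2 * n%:R).

Definition fobj (n k : nat) (s : 'I_n -> R) (x : R) : R :=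
  \sum_(i < n) pinball (plevel n k) (s i - x).

(* scores sorted in descending order: theta_1 >= ... >= theta_n,
   stored 0-indexed (theta_j = nth 0 (sorted_scores s) (j-1)) *)
Definition sorted_scores (n : nat) (s : 'I_n -> R) : seq R :=
  sort (fun a b : R => b <= a) [seq s i | i <- enum 'I_n].

Definition theta (n : nat) (s : 'I_n -> R) (k : nat) : R :=
  nth 0 (sorted_scores s) k.-1.

(* mbar = #{ j <= k : theta_j = theta_k } (1-indexed j) *)
Definition mbar (n : nat) (s : 'I_n -> R) (k : nat) : nat :=
  count (fun j => nth 0 (sorted_scores s) j == theta s k) (iota 0 k).

(* munder = #{ j > k : theta_j = theta_k }, j <= n *)
Definition munder (n : nat) (s : 'I_n -> R) (k : nat) : nat :=
  count (fun j => nth 0 (sorted_scores s) j == theta s k) (iota k (n - k)).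

Definition gm (n : nat) (s : 'I_n -> R) (k : nat) : R :=
  Num.min ((mbar s k)%:R - 1 / 2) ((munder s k)%:R + 1 / 2).

Definition is_Delta (n : nat) (s : 'I_n -> R) (k : nat) (D : R) : Prop :=
  (exists i, s i != theta s k /\ `|s i - theta s k| = D) /\
  (forall i, s i != theta s k -> D <= `|s i - theta s k|).

Definition convex_fun (g : R -> R) : Prop :=
  forall (x y t : R), 0 <= t -> t <= 1 ->
    g (t * x + (1 - t) * y) <= t * g x + (1 - t) * g y.

Definition standing_assumption (n k : nat) (s : 'I_n -> R)
    (F : 'I_n -> R -> R) (L M U : R) : Prop :=
  let ft := fun x => \sum_(i < n) F i x in
  (forall i, convex_fun (F i)) /\
  (forall i x, derivable (F i) x 1) /\
  (forall x y, `|ft x - ft y| <= L * `|x - y|) /\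
  (forall x y, `|derive1 ft x - derive1 ft y| <= M * `|x - y|) /\
  (forall x, `|fobj k s x - ft x| <= U) /\
  (forall i x y, `|derive1 (F i) x - derive1 (F i) y| <= M / n%:R * `|x - y|).

End Defs.

(* Main.v *)
Require Import Defs.
From HB Require Import structures.
From mathcomp Require Import all_boot all_order all_algebra.
From mathcomp Require Import all_classical all_reals all_analysis.
From mathcomp Require Import ring lra zify.
Import Order.TTheory GRing.Theory Num.Theory.
Local Open Scope ring_scope.

Section Aux.
Variable R : realType.

Lemma pin_ge1 (p a : R) : p * a <= pinball p a.
Proof. rewrite /pinball; case: ifP => h //; move/negbT: h; rewrite -ltNge => h; nra. Qed.
Lemma pin_ge2 (p a : R) : (p - 1) * a <= pinball p a.
Proof. rewrite /pinball; case: ifP => h; nra. Qed.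
Lemma pin_pos (p a : R) : 0 <= a -> pinball p a = p * a.
Proof. by rewrite /pinball => ->. Qed.
Lemma pin_neg (p a : R) : a <= 0 -> pinball p a = (p - 1) * a.
Proof. rewrite /pinball; case: ifP => h h'; [have -> : a = 0 by lra|]; lra. Qed.

Lemma stepL (A B C D : R) : C <= A -> B = C - D -> D <= A - B.
Proof. move=> h ->; lra. Qed.

Lemma sum_lin (l : seq R) (P : pred R) (a b : R) :
  \sum_(y <- l) (a + (P y)%:R * b) = (size l)%:R * a + (count P l)%:R * b.
Proof.
elim: l => [|y l IH]; first by rewrite big_nil /=; lra.
rewrite big_cons IH /= !natrD; case: (P y) => /=; lra.
Qed.

Lemma geT : transitive (fun a b : R => b <= a).
Proof. by move=> a b c h1 h2; apply: le_trans h2 h1. Qed.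
Lemma geR : reflexive (fun a b : R => b <= a).
Proof. by move=> a. Qed.
Lemma geTot : total (fun a b : R => b <= a).
Proof. by move=> a b; apply: le_total. Qed.

End Aux.

Theorem theorem1 (R : realType) (n k : nat) (s : 'I_n -> R)
    (F : 'I_n -> R -> R) (L M U Delta thetah x : R) :
  (1 <= n)%N -> (1 <= k)%N -> (k <= n)%N ->
  (exists i j, s i != s j) ->
  is_Delta s k Delta ->
  standing_assumption k s F L M U ->
  (forall y, \sum_(i < n) F i thetah <= \sum_(i < n) F i y) ->
  U <= gm s k * Delta / 8 ->
  \sum_(i < n) F i x - \sum_(i < n) F i thetah < gm s k * Delta / 4 ->
  `|x - theta s k| <= Delta / 2.
Proof.
move=> n1 k1 kn _ _ [_ [_ [_ [_ [HU _]]]]] Hmin HUb Hx.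
set Ls := sorted_scores s.
set th := theta s k.
set p := plevel R n k.
have sizeL : size Ls = n by rewrite /Ls /sorted_scores size_sort size_map size_enum_ord.
have srt : sorted (fun a b : R => b <= a) Ls by apply: sort_sorted; apply: geTot.
have fL : forall z, fobj k s z = \sum_(y <- Ls) pinball p (y - z).
  move=> z; rewrite /fobj /Ls /sorted_scores (perm_big _ (permEl (perm_sort _ _))) big_map.
  by rewrite big_enum.
have Hf : fobj k s x - fobj k s th < gm s k * Delta / 2.
  have h1 := HU x; have h2 := HU th; have h3 := Hmin th.
  move: h1 h2; rewrite !ler_norml => /andP[a1 a2] /andP[b1 b2]; lra.
have thnth : th = nth 0 Ls k.-1 by [].
have geth : forall j, (j < k)%N -> th <= nth 0 Ls j.
  move=> j jk; rewrite thnth.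
  apply: (sorted_leq_nth (@geT R) (@geR R) 0 srt); rewrite ?inE ?sizeL //; lia.
have leth : forall j, (k <= j)%N -> (j < n)%N -> nth 0 Ls j <= th.
  move=> j kj jn; rewrite thnth.
  apply: (sorted_leq_nth (@geT R) (@geR R) 0 srt); rewrite ?inE ?sizeL //; lia.
have Lsplit : Ls = take k Ls ++ drop k Ls by rewrite cat_take_drop.
have mbE : mbar s k = count (fun y => y == th) (take k Ls).
  by rewrite /mbar -(map_nth_iota0 0 (_ : (k <= size Ls)%N)) ?sizeL // count_map.
have muE : munder s k = count (fun y => y == th) (drop k Ls).
  rewrite /munder (_ : count _ _ = count (fun y => y == th) [seq nth 0 Ls j | j <- iota k (n - k)]); last by rewrite count_map.
  by rewrite map_nth_iota ?sizeL // take_oversize // size_drop sizeL.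
have cA : (n - k + mbar s k <= count (fun y => (y <= th)%R) Ls)%N.
  rewrite [X in count _ X]Lsplit count_cat (addnC (n - k)%N) leq_add //.
    by rewrite mbE; apply: sub_count => y /= /eqP ->.
  have : all (fun y => y <= th) (drop k Ls).
    apply/(all_nthP 0) => i; rewrite size_drop sizeL => hi.
    rewrite nth_drop; apply: leth; lia.
  by rewrite all_count => /eqP ->; rewrite size_drop sizeL.
have cB : (k + munder s k <= count (fun y => (th <= y)%R) Ls)%N.
  rewrite [X in count _ X]Lsplit count_cat leq_add //; last first.
    by rewrite muE; apply: sub_count => y /= /eqP ->.
  have : all (fun y => th <= y) (take k Ls).
    apply/(all_nthP 0) => i; rewrite size_takel ?sizeL // => hik.
    rewrite nth_take //; apply: geth => //.
  by rewrite all_count => /eqP ->; rewrite size_takel ?sizeL.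
have mb1 : (1 <= mbar s k)%N.
  rewrite mbE -has_count; apply/hasP; exists th => //.
  rewrite thnth; apply/(nthP 0); exists k.-1; rewrite ?size_takel ?sizeL //; first lia.
  by rewrite nth_take //; lia.
set t := x - th.
have nP : n%:R * p = (n - k)%:R + 1/2 :> R.
  have n0 : n%:R != 0 :> R by rewrite pnatr_eq0 -lt0n.
  rewrite /p /plevel; field; exact: n0.
have nkE : (n - k)%:R + k%:R = n%:R :> R by rewrite -natrD subnK.
have B1 : fobj k s x - fobj k s th >=
          (size Ls)%:R * (- p * t) + (count (fun y => y <= th) Ls)%:R * t.
  rewrite !fL -(@sum_lin R Ls (fun y => y <= th) (- p * t) t) -sumrB; apply: ler_sum => y _.
  have [hy|hy] := lerP y th; rewrite /=.
    rewrite (@pin_neg R p (y - th)); last by lra.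
    by apply: (@stepL R _ _ _ _ (@pin_ge2 R p (y - x))); rewrite /t; ring.
  rewrite (@pin_pos R p (y - th)); last by lra.
  by apply: (@stepL R _ _ _ _ (@pin_ge1 R p (y - x))); rewrite /t; ring.
have B2 : fobj k s x - fobj k s th >=
          (size Ls)%:R * ((1 - p) * t) + (count (fun y => th <= y) Ls)%:R * (- t).
  rewrite !fL -(@sum_lin R Ls (fun y => th <= y) ((1 - p) * t) (- t)) -sumrB; apply: ler_sum => y _.
  have [hy|hy] := lerP th y; rewrite /=.
    rewrite (@pin_pos R p (y - th)); last by lra.
    by apply: (@stepL R _ _ _ _ (@pin_ge1 R p (y - x))); rewrite /t; ring.
  rewrite (@pin_neg R p (y - th)); last by lra.
  by apply: (@stepL R _ _ _ _ (@pin_ge2 R p (y - x))); rewrite /t; ring.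
move: cA cB mb1; rewrite -!(ler_nat R) !natrD => cA cB mb1.
move: B1 B2 Hf; rewrite sizeL.
have g1 : gm s k <= (mbar s k)%:R - 1/2 by rewrite /gm ge_min lexx.
have g2 : gm s k <= (munder s k)%:R + 1/2 by rewrite /gm ge_min lexx orbT.
have g0 : 0 < gm s k.
  rewrite /gm lt_min; apply/andP; split; first lra.
  have : 0 <= (munder s k)%:R :> R by []. lra.
set A := (count _ Ls)%:R in cA *.
set B := (count _ Ls)%:R in cB *.
set N := n%:R in nP nkE * => B1 B2 Hf.
have e1 : N * (- p * t) + A * t = t * (A - N * p) by ring.
have e2 : N * ((1 - p) * t) + B * (- t) = - t * (B - N + N * p) by ring.
rewrite e1 nP in B1; rewrite e2 nP in B2.
rewrite /t; case: (lerP 0 (x - th)) => ht.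
  rewrite ger0_norm //; rewrite -/t in ht *.
  have : t * gm s k <= t * (A - ((n - k)%:R + 1 / 2)) by apply: ler_wpM2l; lra.
  move=> h; have h2 : t * gm s k < (Delta / 2) * gm s k.
    have -> : Delta / 2 * gm s k = gm s k * Delta / 2 by ring. lra.
  by rewrite ltr_pM2r // in h2; apply: ltW.
rewrite ltr0_norm //; rewrite -/t in ht *.
have : - t * gm s k <= - t * (B - N + ((n - k)%:R + 1 / 2)) by apply: ler_wpM2l; lra.
move=> h; have h2 : - t * gm s k < (Delta / 2) * gm s k.
  have -> : Delta / 2 * gm s k = gm s k * Delta / 2 by ring. lra.
by rewrite ltr_pM2r // in h2; apply: ltW.
Qed.
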